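(* Let $m,n\ge 1$, $k\ge 2$ and $P\in\mathbb{R}[x_1,\ldots,x_n]$. There is exactly one polynomial $P_0\in V_{m,k}$ such that $P-P_0$ has a zero of multiplicity at least $k$ at every point of $mB^n\setminus\{\mathbf 0\}$ and a zero of multiplicity at least $k-1$ at $\mathbf 0$. This polynomial satisfies $\deg P_0\le \deg P$.
   Context: $mB^n=\{0,1,\ldots,m\}^n$. A polynomial $f$ has a zero of multiplicity at least $k$ at $\mathbf a$ if all partial derivatives of $f$ of order less than $k$ vanish at $\mathbf a$. For an integer $k\ge 2$, a polynomial $P\in\mathbb{R}[x_1,\ldots,x_n]$ is called $(m,k)$-reduced if two conditions hold: $\deg P\le mn+(m+1)(k-1)-1$, and no monomial of $P$ is divisible by $x_{i_1}^{m+1}\cdots x_{i_k}^{m+1}$ for any indices $i_1,\ldots,i_k$ (not necessarily distinct). $V_{m,k}$ is the space of all $(m,k)$-reduced polynomials. *)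

(* Defs.v *)
From HB Require Import structures.
From mathcomp Require Import all_boot all_order all_algebra.
From mathcomp Require Import mpoly.
From mathcomp Require Import Rstruct.
From Stdlib Require Reals.

Set Implicit Arguments.
Unset Strict Implicit.
Unset Printing Implicit Defensive.

Import Order.TTheory GRing.Theory Num.Theory.
Local Open Scope ring_scope.

Notation RR := Rdefinitions.R.

Definition zero_mult_ge (n : nat) (f : {mpoly RR[n]}) (a : 'I_n -> RR) (k : nat) : Prop :=
  forall mu : 'X_{1..n}, (mdeg mu < k)%N -> (f^`M[mu]).@[a] = 0.

(* The points of m B^n = {0,...,m}^n, as integer vectors. *)
Definition in_mBn (n m : nat) (c : 'I_n -> nat) : Prop := forall i, (c i <= m)%N.

Definition real_pt (n : nat) (c : 'I_n -> nat) : 'I_n -> RR := fun i => (c i)%:R.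

(* The monomial x_{i_1}^{m+1} ... x_{i_k}^{m+1} (indices not necessarily
   distinct) divides the monomial mu. *)
Definition bigmon_divides (n m k : nat) (s : k.-tuple 'I_n) (mu : 'X_{1..n}) : Prop :=
  forall i : 'I_n, ((m.+1) * count_mem i s <= mu i)%N.

(* (m,k)-reduced polynomials.  deg P <= mn + (m+1)(k-1) - 1 is expressed via
   msize P = 1 + deg P (msize 0 = 0, i.e. deg 0 = -oo). *)
Definition reduced (n m k : nat) (P : {mpoly RR[n]}) : Prop :=
  (msize P <= m * n + m.+1 * k.-1)%N /\
  forall mu : 'X_{1..n}, mu \in msupp P ->
    forall s : k.-tuple 'I_n, ~ bigmon_divides m s mu.

Definition vanish_cond (n m k : nat) (Q : {mpoly RR[n]}) : Prop :=
  (forall c : 'I_n -> nat, in_mBn m c -> (exists i, c i <> 0%N) ->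
     zero_mult_ge Q (real_pt c) k) /\
  zero_mult_ge Q (fun _ => 0) k.-1.

(* Main.v *)
Require Import Defs.
From HB Require Import structures.
From mathcomp Require Import all_boot all_order all_algebra.
From mathcomp Require Import mpoly.
From mathcomp Require Import Rstruct.
From mathcomp Require Import ring zify.
From Stdlib Require Reals.
Set Implicit Arguments.
Unset Strict Implicit.
Unset Printing Implicit Defensive.
Import Order.TTheory GRing.Theory Num.Theory.
Local Open Scope ring_scope.
Lemma alg1 (R : comNzRingType) (x y z : R) e : (x*y) *+ e * z = (y*z) *+ e * x.
Proof. by rewrite !mulrnAl [y * z * x]mulrC mulrA. Qed.
Lemma alg2 (R : comNzRingType) (x y z : R) : x * y * z = y * z * x.
Proof. ring. Qed.
Section Lift.
Variable n : nat.
Implicit Types (p q : {poly RR}) (i j : 'I_n).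

Definition lift i p : {mpoly RR[n]} := (map_poly (@mpolyC n RR) p).['X_i].

Lemma liftD i p q : lift i (p + q) = lift i p + lift i q.
Proof. by rewrite /lift rmorphD hornerD. Qed.
Lemma liftB i p q : lift i (p - q) = lift i p - lift i q.
Proof. by rewrite /lift rmorphB hornerD hornerN. Qed.
Lemma liftM i p q : lift i (p * q) = lift i p * lift i q.
Proof. by rewrite /lift rmorphM hornerM. Qed.
Lemma liftC i c : lift i c%:P = c%:MP.
Proof. by rewrite /lift map_polyC hornerC. Qed.
Lemma liftX i : lift i 'X = 'X_i.
Proof. by rewrite /lift map_polyX hornerX. Qed.
Lemma lift1 i : lift i 1 = 1.
Proof. by rewrite -polyC1 liftC. Qed.
Lemma liftXn i p e : lift i (p ^+ e) = lift i p ^+ e.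
Proof. by elim: e => [|e ih]; rewrite ?expr0 ?lift1 // !exprS liftM ih. Qed.
Lemma liftZ i c p : lift i (c *: p) = c *: lift i p.
Proof. by rewrite -mul_polyC liftM liftC mul_mpolyC. Qed.
Lemma lift0 i : lift i 0 = 0.
Proof. by rewrite -polyC0 liftC. Qed.
Lemma liftMn i p e : lift i (p *+ e) = lift i p *+ e.
Proof. by elim: e => [|e ih]; rewrite ?mulr0n ?lift0 // !mulrS liftD ih. Qed.
Lemma liftMX i p c : lift i (p * 'X + c%:P) = lift i p * 'X_i + c%:MP.
Proof. by rewrite liftD liftM liftX liftC. Qed.

Lemma meval_lift i p a : (lift i p).@[a] = p.[a i].
Proof.
elim/poly_ind: p => [|p c ih]; first by rewrite lift0 meval0 horner0.
by rewrite liftMX mevalD mevalM mevalXU mevalC ih hornerMXaddC.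
Qed.

Lemma mderivXU i j : ('X_i : {mpoly RR[n]})^`M(j) = (i == j)%:R.
Proof.
rewrite mderivX mnm1E; case: eqP => [->|_]; last by rewrite scale0r.
by rewrite scale1r (_ : (U_(j) - U_(j))%MM = 0%MM) ?mpolyX0 //; apply/mnmP=> l; rewrite mnmBE mnm0E subnn.
Qed.

Lemma mderiv_lift i j p :
  (lift i p)^`M(j) = if i == j then lift i p^`() else 0.
Proof.
elim/poly_ind: p => [|p c ih]; first by rewrite lift0 mderiv0 deriv0 lift0; case: eqP.
rewrite liftMX mderivD mderivC addr0 mderivM ih mderivXU derivMXaddC.
case: eqP => _; last by rewrite mul0r mulr0 add0r.
by rewrite mulr1 liftD liftM liftX addrC.
Qed.

End Lift.
Section Sep.
Variable n : nat.
Implicit Types (p q : {poly RR}) (i j : 'I_n).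

Lemma lift_sum i p N : (size p <= N)%N ->
  lift i p = \sum_(j < N) p`_j *: ('X_[U_(i) *+ j] : {mpoly RR[n]}).
Proof.
move=> hN; have h : (size (map_poly (@mpolyC n RR) p) <= N)%N by rewrite size_map_poly.
rewrite /lift (horner_coef_wide _ h).
by apply: eq_bigr => j _; rewrite coef_map /= mul_mpolyC mpolyXn.
Qed.

Lemma mnm_sumU (N : nat) (t : {ffun 'I_n -> 'I_N}) j :
  (\sum_i (U_(i) *+ t i))%MM j = t j.
Proof.
rewrite mnm_sumE (bigD1 j) //= big1 => [|l /negPf hl]; last by rewrite mulmnE mnm1E hl.
by rewrite mulmnE mnm1E eqxx mul1n addn0.
Qed.

Lemma prodZX (c : 'I_n -> RR) (m : 'I_n -> 'X_{1..n}) :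
  \prod_i (c i *: ('X_[m i] : {mpoly RR[n]})) = (\prod_i c i) *: 'X_[\sum_i m i].
Proof.
rewrite -mul_mpolyC -mprodXE rmorph_prod -big_split /=.
by apply: eq_bigr => i _; rewrite mul_mpolyC.
Qed.

Lemma mcoeff_sep (p : 'I_n -> {poly RR}) (r : 'X_{1..n}) :
  (\prod_i lift i (p i))@_r = \prod_i (p i)`_(r i).
Proof.
set N := (\sum_i size (p i) + mdeg r).+1.
have hs i : (size (p i) <= N)%N.
  rewrite /N; apply: leqW; rewrite (leq_trans _ (leq_addr _ _)) //.
  by rewrite (bigD1 i) //= leq_addr.
have hr i : (r i < N)%N.
  rewrite /N ltnS (leq_trans _ (leq_addl _ _)) // mdegE (bigD1 i) //= leq_addr //.
rewrite (eq_bigr _ (fun i _ => lift_sum i (hs i))) bigA_distr_bigA /=.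
rewrite raddf_sum /=.
pose t0 : {ffun 'I_n -> 'I_N} := [ffun i => Ordinal (hr i)].
rewrite (bigD1 t0) //= [X in _ + X]big1 ?addr0.
  rewrite prodZX mcoeffZ mcoeffX.
  have -> : (\sum_i (U_(i) *+ t0 i))%MM = r by apply/mnmP => j; rewrite mnm_sumU ffunE.
  by rewrite eqxx mulr1; apply: eq_bigr => i _; rewrite ffunE.
move=> t ht; rewrite prodZX mcoeffZ mcoeffX.
case: eqP => [e|]; last by rewrite mulr0.
case/eqP: ht; apply/ffunP => i; apply/val_inj; rewrite ffunE /=.
by rewrite -e mnm_sumU.
Qed.

Lemma msupp_sep (p : 'I_n -> {poly RR}) (r : 'X_{1..n}) :
  r \in msupp (\prod_i lift i (p i)) -> forall i, (p i)`_(r i) != 0.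
Proof.
rewrite mcoeff_msupp mcoeff_sep => /prodf_neq0 h i; exact: h.
Qed.

Lemma mpolyX_sep (r : 'X_{1..n}) :
  'X_[r] = \prod_i lift i ('X^(r i)) :> {mpoly RR[n]}.
Proof.
apply/mpolyP => s; rewrite mcoeff_sep mcoeffX.
case: eqP => [<-|ne].
  by rewrite big1 // => i _; rewrite coefXn eqxx.
have [i hi] : exists i, r i != s i.
  apply/existsP; apply: contraT; rewrite negb_exists => /forallP h.
  by case: ne; apply/mnmP => i; apply/eqP; move: (h i); rewrite negbK.
by rewrite (bigD1 i) //= coefXn eq_sym (negPf hi) mul0r.
Qed.
End Sep.
Section Deriv.
Variable n : nat.
Implicit Types (i j : 'I_n).

Lemma mderiv_prod_only (F : 'I_n -> {mpoly RR[n]}) j :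
  (forall i, i != j -> (F i)^`M(j) = 0) ->
  (\prod_i F i)^`M(j) = (F j)^`M(j) * \prod_(i | i != j) F i.
Proof.
move=> h; rewrite (bigD1 j) //= mderivM.
have -> : (\prod_(i | i != j) F i)^`M(j) = 0.
  elim/big_ind: _ => [|x y hx hy|i hi]; first by rewrite mderivC.
  - by rewrite mderivM hx hy mul0r mulr0 addr0.
  - exact: h.
by rewrite mulr0 addr0.
Qed.

Variable phi : 'I_n -> {poly RR}.
Definition Sm (e : 'I_n -> nat) : {mpoly RR[n]} := \prod_i lift i (phi i ^+ e i).
Definition dec (e : 'I_n -> nat) j := fun i => if i == j then (e i).-1 else e i.

Lemma Sm_eq e e' : e =1 e' -> Sm e = Sm e'.
Proof. by move=> h; apply: eq_bigr => i _; rewrite h. Qed.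

Lemma Sm_dec e j : (0 < e j)%N -> Sm e = Sm (dec e j) * lift j (phi j).
Proof.
move=> hj; rewrite /Sm (bigD1 j) //= [X in _ = X * _](bigD1 j) //= /dec eqxx.
have -> : \prod_(i | i != j) lift i (phi i ^+ (if i == j then (e i).-1 else e i))
   = \prod_(i | i != j) lift i (phi i ^+ e i).
  by apply: eq_bigr => i /negPf ->.
by rewrite mulrAC -liftM -exprSr prednK.
Qed.

Lemma mderiv_Sm e j :
  (Sm e)^`M(j) = if e j == 0%N then 0 else
     (e j)%:R *: (Sm (dec e j) * lift j (phi j)^`()).
Proof.
rewrite /Sm mderiv_prod_only => [|i hi]; last by rewrite mderiv_lift (negPf hi).
rewrite mderiv_lift eqxx deriv_exp.
case: eqP => [->|]; first by rewrite mulr0n lift0 mul0r.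
move=> /eqP hj; rewrite [in RHS](bigD1 j) //= /dec eqxx.
have -> : \prod_(i | i != j) lift i (phi i ^+ (if i == j then (e i).-1 else e i))
   = \prod_(i | i != j) lift i (phi i ^+ e i).
  by apply: eq_bigr => i /negPf ->.
by rewrite scaler_nat liftMn liftM mulrnAl [X in _ = X *+ _]mulrC mulrA.
Qed.

Lemma mderiv_SmW e W j :
  (Sm e * W)^`M(j) = if e j == 0%N then Sm e * W^`M(j) else
    Sm (dec e j) * ((e j)%:R *: (lift j (phi j)^`() * W) + lift j (phi j) * W^`M(j)).
Proof.
rewrite mderivM mderiv_Sm; case: eqP => [_|/eqP hj]; first by rewrite mul0r add0r.
by rewrite (Sm_dec (e:=e) (j:=j)) ?lt0n // -scalerAl mulrDr scalerAr !mulrA !scalerAr mulrA.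
Qed.

Variable a : 'I_n -> RR.
Hypothesis ha : forall i, (phi i).[a i] = 0.

Lemma meval_Sm e : (Sm e).@[a] = \prod_i ((phi i).[a i]) ^+ e i.
Proof. by rewrite /Sm; elim/big_rec2: _ => [|i x y _ <-]; rewrite ?meval1 // mevalM meval_lift horner_exp. Qed.

Lemma mnm_split (nu : 'X_{1..n}) : nu != 0%MM ->
  exists j, (0 < nu j)%N /\ nu = (U_(j) + (nu - U_(j)))%MM.
Proof.
move=> hnu.
have [j hj] : exists j, (0 < nu j)%N.
  apply/existsP; apply: contraR hnu; rewrite negb_exists => /forallP h.
  apply/eqP/mnmP => i; move: (h i); rewrite mnm0E lt0n negbK => /eqP //.
exists j; split => //; apply/mnmP => i; rewrite mnmDE mnmBE mnm1E.
by case: eqP => [<-|]; [rewrite add1n subn1 prednK | rewrite add0n subn0].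
Qed.

Lemma mdeg_split (nu : 'X_{1..n}) j : nu = (U_(j) + (nu - U_(j)))%MM ->
  mdeg nu = (mdeg (nu - U_(j))).+1.
Proof. by move=> {1}->; rewrite mdegD mdeg1. Qed.

Lemma D1 (nu : 'X_{1..n}) (e : 'I_n -> nat) (W : {mpoly RR[n]}) :
  (exists i, (nu i < e i)%N) -> ((Sm e * W)^`M[nu]).@[a] = 0.
Proof.
have [d] := ubnP (mdeg nu); elim: d nu e W => // d IH nu e W hd [i hi].
have [->|hnu] := eqVneq nu 0%MM.
  rewrite mderivm0m mevalM meval_Sm (bigD1 i) //= ha expr0n.
  by move: hi => /(leq_ltn_trans (leq0n _)) /lt0n_neq0 /negPf ->; rewrite !mul0r.
have [j [hj e2]] := mnm_split hnu.
rewrite e2 mderivmDm mderivmU1m mderiv_SmW.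
have hd' : (mdeg (nu - U_(j)) < d)%N by move: hd; rewrite (mdeg_split e2).
case: eqP => [e0|/eqP ej].
  apply: IH => //; exists i; move: hi e0; rewrite mnmBE mnm1E.
  case: (eqVneq i j) => [->|/negPf hij]; rewrite ?eqxx ?(eq_sym j i) ?hij /=; lia.
apply: IH => //; exists i; move: hi ej; rewrite /dec mnmBE mnm1E.
case: (eqVneq i j) => [->|/negPf hij]; rewrite ?eqxx ?(eq_sym j i) ?hij /=; lia.
Qed.

Lemma D2 (nu : 'X_{1..n}) (W : {mpoly RR[n]}) :
  ((Sm (fun i => nu i) * W)^`M[nu]).@[a] =
    (\prod_i (((nu i)`!)%:R * ((phi i)^`().[a i]) ^+ nu i)) * W.@[a].
Proof.
have [d] := ubnP (mdeg nu); elim: d nu W => // d IH nu W hd.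
have [->|hnu] := eqVneq nu 0%MM.
  rewrite mderivm0m mevalM meval_Sm; congr (_ * _).
  have h0 i : (0%MM : 'X_{1..n}) i = 0%N by rewrite mnm0E.
  rewrite !big1 // => i _; rewrite h0 expr0 //.
  by rewrite fact0 mul1r.
have [j [hj e2]] := mnm_split hnu.
rewrite {1}e2 mderivmDm mderivmU1m mderiv_SmW.
have hd' : (mdeg (nu - U_(j)) < d)%N by move: hd; rewrite (mdeg_split e2).
move: (hj); rewrite lt0n => /negPf ->.
rewrite (Sm_eq (e' := fun i => (nu - U_(j))%MM i)); last first.
  move=> i; rewrite /dec mnmBE mnm1E.
  by case: (eqVneq i j) => [->|/negPf hij]; rewrite ?eqxx ?(eq_sym j i) ?hij ?subn1 ?subn0.
rewrite IH // mevalD mevalZ !mevalM !meval_lift ha mul0r addr0.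
rewrite (bigD1 j) //= [in RHS](bigD1 j) //=.
have -> : \prod_(i | i != j) (((nu - U_(j))%MM i)`!%:R * (phi i)^`().[a i] ^+ (nu - U_(j))%MM i)
  = \prod_(i | i != j) ((nu i)`!%:R * (phi i)^`().[a i] ^+ nu i).
  by apply: eq_bigr => i /negPf hi; rewrite mnmBE mnm1E eq_sym hi subn0.
rewrite mnmBE mnm1E eqxx subn1.
move: hj; case: (nu j) => // k _ /=.
set A := \prod_(i | i != j) _; set w := W.@[a]; set c := (phi j)^`().[a j].
rewrite factS natrM exprS; ring.
Qed.
End Deriv.
Section Univ.
Variable m : nat.

Definition gp : {poly RR} := \prod_(j <- iota 0 m.+1) ('X - (j%:R)%:P).
Definition fp : {poly RR} := \prod_(j <- iota 1 m) ('X - (j%:R)%:P).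

Lemma gp_Xf : gp = 'X * fp.
Proof. by rewrite /gp /fp /= big_cons subr0. Qed.

Lemma size_gp : size gp = m.+2.
Proof. by rewrite /gp size_prod_XsubC size_iota. Qed.
Lemma size_fp : size fp = m.+1.
Proof. by rewrite /fp size_prod_XsubC size_iota. Qed.
Lemma gp_neq0 : gp != 0.
Proof. by rewrite -size_poly_eq0 size_gp. Qed.
Lemma fp_lead : fp`_m = 1.
Proof.
have := monic_prod_XsubC (iota 1 m) predT (fun j => (j%:R : RR)).
by move/monicP; rewrite lead_coefE size_fp.
Qed.

Lemma natr_inj_RR (b c : nat) : ((b%:R : RR) == c%:R) = (b == c).
Proof. by rewrite eqr_nat. Qed.

Lemma gp_root b : (b <= m)%N -> gp.[b%:R] = 0.
Proof.
move=> hb; have hb' : b \in iota 0 m.+1 by rewrite mem_iota; lia.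
rewrite /gp horner_prod (bigD1_seq b hb' (iota_uniq _ _)) /=.
by rewrite hornerXsubC subrr mul0r.
Qed.

Lemma fp_root b : (1 <= b <= m)%N -> fp.[b%:R] = 0.
Proof.
move=> hb; have hb' : b \in iota 1 m by rewrite mem_iota; lia.
rewrite /fp horner_prod (bigD1_seq b hb' (iota_uniq _ _)) /=.
by rewrite hornerXsubC subrr mul0r.
Qed.

Lemma fp0_neq0 : fp.[0] != 0.
Proof.
rewrite /fp horner_prod prodf_seq_neq0; apply/allP => j; rewrite mem_iota => hj.
by rewrite /= hornerXsubC sub0r oppr_eq0 pnatr_eq0; apply/eqP; lia.
Qed.

Lemma gp_deriv_neq0 b : (b <= m)%N -> (gp^`()).[b%:R] != 0.
Proof.
move=> hb; have hb' : b \in iota 0 m.+1 by rewrite mem_iota; lia.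
rewrite /gp (bigD1_seq b hb' (iota_uniq _ _)) /=.
rewrite derivM derivXsubC mul1r hornerD hornerM hornerXsubC subrr mul0r addr0.
rewrite horner_prod prodf_seq_neq0; apply/allP => j _; apply/implyP => hj.
by rewrite hornerXsubC subr_eq0 natr_inj_RR eq_sym.
Qed.

Definition lag (b : nat) : {poly RR} :=
  (\prod_(c <- iota 0 m.+1 | c != b) ((b%:R - c%:R : RR)^-1)) *:
  \prod_(c <- iota 0 m.+1 | c != b) ('X - (c%:R)%:P).

Lemma lag_val (b c : nat) : (b <= m)%N -> (c <= m)%N -> (lag b).[c%:R] = (b == c)%:R.
Proof.
move=> hb hc; rewrite /lag hornerZ horner_prod -big_split /=.
have [<-|nbc] := eqVneq b c.
  rewrite big1_seq // => j /andP [hj _].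
  rewrite hornerXsubC mulVf // subr_eq0 natr_inj_RR eq_sym //.
have hc' : c \in iota 0 m.+1 by rewrite mem_iota; lia.
rewrite big_mkcond (bigD1_seq c hc' (iota_uniq _ _)) /=.
by rewrite eq_sym nbc hornerXsubC subrr mulr0 mul0r.
Qed.

Lemma size_lag b : (b <= m)%N -> (size (lag b) <= m.+1)%N.
Proof.
move=> hb; rewrite /lag (leq_trans (size_scale_leq _ _)) //.
rewrite -big_filter size_prod_XsubC size_filter.
have hb' : b \in iota 0 m.+1 by rewrite mem_iota; lia.
have := count_predC (pred1 b) (iota 0 m.+1).
rewrite size_iota (count_uniq_mem _ (iota_uniq _ _)) hb'.
have -> : count (predC (pred1 b)) (iota 0 m.+1) = count (fun c => c != b) (iota 0 m.+1).
  by apply: eq_count => c.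
lia.
Qed.

Lemma interp (p : {poly RR}) : (size p <= m.+1)%N ->
  p = \sum_(b < m.+1) p.[b%:R] *: lag b.
Proof.
move=> hp; apply/eqP; rewrite -subr_eq0; apply/eqP.
set d := _ - _.
apply: contraTeq isT => dn0.
have hs : (size d <= m.+1)%N.
  rewrite (leq_trans (size_add _ _)) // geq_max hp size_opp.
  rewrite (leq_trans (size_sum _ _ _)) //; apply/bigmax_leqP => b _.
  by rewrite (leq_trans (size_scale_leq _ _)) // size_lag // -ltnS.
have hroot : all (root d) [seq (c%:R : RR) | c <- iota 0 m.+1].
  apply/allP => x /mapP [c]; rewrite mem_iota => hc ->.
  rewrite /root /d hornerD hornerN horner_sum.
  rewrite (bigD1 (Ordinal (_ : c < m.+1)%N)) /=; last by lia.
  rewrite big1 => [|b /negP hb]; last first.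
    rewrite hornerZ lag_val ?(eqxx, mulr1); first last.
    - lia.
    - by rewrite -ltnS.
    by case: eqP => [e|]; [case: hb; apply/eqP/val_inj | rewrite mulr0].
  by rewrite hornerZ lag_val ?eqxx ?mulr1 ?addr0 ?subrr //; lia.
have huniq : uniq [seq (c%:R : RR) | c <- iota 0 m.+1].
  rewrite map_inj_uniq ?iota_uniq // => x y /eqP; rewrite natr_inj_RR => /eqP //.
have := max_poly_roots dn0 hroot huniq.
by rewrite size_map size_iota ltnNge hs.
Qed.
End Univ.
Lemma sum_neq0_exists (I : eqType) (s : seq I) (F : I -> RR) :
  \sum_(i <- s) F i != 0 -> exists2 i, i \in s & F i != 0.
Proof.
elim: s => [|x s ih]; first by rewrite big_nil eqxx.
rewrite big_cons; have [hx|hx] := eqVneq (F x) 0.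
  by rewrite hx add0r => /ih [i hi hF]; exists i => //; rewrite inE hi orbT.
by move=> _; exists x => //; rewrite inE eqxx.
Qed.

Section Expand.
Variable m : nat.
Local Notation gp := (gp m).

Definition dd (p : {poly RR}) l := iter l (fun d => d %/ gp) p.
Definition rho p l := dd p l %% gp.

Lemma expand_univ L p : p = \sum_(l < L) gp ^+ l * rho p l + gp ^+ L * dd p L.
Proof.
elim: L => [|L ih]; first by rewrite big_ord0 add0r expr0 mul1r.
rewrite big_ord_recr /= {1}ih -addrA; congr (_ + _).
rewrite /rho {1}(divp_eq (dd p L) gp) exprSr.
set a := dd p L %/ gp; set b := dd p L %% gp; set c := gp ^+ L.
by rewrite mulrDr addrC -mulrA [gp * _]mulrC.
Qed.

Lemma size_dd p l : size (dd p l) = (size p - m.+1 * l)%N.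
Proof.
elim: l => [|l ih]; first by rewrite muln0 subn0.
rewrite /dd iterS -/(dd p l) size_divp ?gp_neq0 // ih size_gp /=.
by rewrite mulnS addnC subnDA.
Qed.

Lemma rho_coef p l r : (rho p l)`_r != 0 -> (r <= m)%N /\ (m.+1 * l + r < size p)%N.
Proof.
move=> h; have hr : (r < size (rho p l))%N.
  by rewrite ltnNge; apply: contra h => hs; rewrite nth_default.
have h1 := ltn_modp (dd p l) gp; rewrite gp_neq0 size_gp in h1.
have h2 := leq_modp (dd p l) gp; rewrite size_dd in h2.
rewrite /rho in hr; split; lia.
Qed.

Lemma dd_big (p : {poly RR}) L : (size p <= m.+1 * L)%N -> dd p L = 0.
Proof. by move=> h; apply/eqP; rewrite -size_poly_eq0 size_dd; lia. Qed.

Lemma expand_Xn e L : (e < L)%N ->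
  ('X^e : {poly RR}) = \sum_(l < L) gp ^+ l * rho 'X^e l.
Proof.
move=> h; rewrite {1}(expand_univ L 'X^e) dd_big ?mulr0 ?addr0 // size_polyXn.
rewrite (leq_trans h) //; lia.
Qed.
End Expand.
Section MExpand.
Variables n m : nat.
Local Notation gp := (gp m).

Definition GG (e : 'I_n -> nat) : {mpoly RR[n]} := Sm (fun=> gp) e.

Definition Rq B (P : {mpoly RR[n]}) (q : {ffun 'I_n -> 'I_B}) : {mpoly RR[n]} :=
  \sum_(mu <- msupp P) P@_mu *: \prod_i lift i (rho m 'X^(mu i) (q i)).

Lemma expansion (P : {mpoly RR[n]}) B : (msize P <= B)%N ->
  P = \sum_(q : {ffun 'I_n -> 'I_B}) GG (fun i => q i) * Rq P q.
Proof.
move=> hB.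
have hX mu : mu \in msupp P -> 'X_[mu] = \sum_(q : {ffun 'I_n -> 'I_B})
     GG (fun i => q i) * \prod_i lift i (rho m 'X^(mu i) (q i)).
  move=> hmu; rewrite mpolyX_sep.
  have hl i : (mu i < B)%N.
    apply: leq_trans hB; apply: leq_ltn_trans (msize_mdeg_lt hmu).
    by rewrite mdegE (bigD1 i) //= leq_addr.
  rewrite (eq_bigr (fun i => \sum_(l < B) lift i (gp ^+ l) * lift i (rho m 'X^(mu i) l))); last first.
    move=> i _; rewrite {1}(expand_Xn m (hl i)) (big_morph _ (liftD i) (lift0 i)).
    by apply: eq_bigr => l _; rewrite liftM.
  rewrite bigA_distr_bigA /=; apply: eq_bigr => q _.
  by rewrite big_split.
rewrite {1}(mpolyE P) (eq_big_seq _ (fun mu hmu => congr1 _ (hX mu hmu))) /=.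
rewrite /Rq; under [RHS]eq_bigr => q _ do rewrite mulr_sumr.
rewrite /= exchange_big /=.
apply: eq_bigr => mu _; rewrite scaler_sumr; apply: eq_bigr => q _.
by rewrite scalerAr.
Qed.

Lemma Rq_coef (P : {mpoly RR[n]}) B (q : {ffun 'I_n -> 'I_B}) r :
  (Rq P q)@_r != 0 -> exists2 mu, mu \in msupp P &
    forall i, (r i <= m)%N /\ (m.+1 * q i + r i <= mu i)%N.
Proof.
rewrite /Rq raddf_sum /= => /sum_neq0_exists [mu hmu].
rewrite mcoeffZ mcoeff_sep mulf_eq0 negb_or => /andP [_ /prodf_neq0 h].
exists mu => // i; have := rho_coef (h i isT); rewrite size_polyXn; lia.
Qed.
End MExpand.
Section CN.
Variables n m : nat.

Definition box (R : {mpoly RR[n]}) := forall r, R@_r != 0 -> forall i, (r i <= m)%N.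
Definition pt (c : {ffun 'I_n -> 'I_m.+1}) : 'I_n -> RR := fun i => (c i : nat)%:R.
Definition LL (c : {ffun 'I_n -> 'I_m.+1}) : {mpoly RR[n]} := \prod_i lift i (lag m (c i)).

Lemma interp_mon (r : 'X_{1..n}) : (forall i, r i <= m)%N ->
  'X_[r] = \sum_(c : {ffun 'I_n -> 'I_m.+1}) ('X_[r] : {mpoly RR[n]}).@[pt c] *: LL c.
Proof.
move=> hr; rewrite {1}mpolyX_sep.
rewrite (eq_bigr (fun i => \sum_(b < m.+1) ((b%:R : RR) ^+ r i) *: lift i (lag m b))); last first.
  move=> i _; rewrite {1}(@interp m ('X^(r i))); last by rewrite size_polyXn ltnS.
  rewrite (big_morph _ (liftD i) (lift0 i)); apply: eq_bigr => b _.
  by rewrite liftZ hornerXn.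
rewrite bigA_distr_bigA /=; apply: eq_bigr => c _.
by rewrite scaler_prod mevalX.
Qed.

Lemma interp_box (R : {mpoly RR[n]}) : box R ->
  R = \sum_(c : {ffun 'I_n -> 'I_m.+1}) R.@[pt c] *: LL c.
Proof.
move=> hb.
have hX r : r \in msupp R -> 'X_[r] = \sum_(c : {ffun 'I_n -> 'I_m.+1}) ('X_[r] : {mpoly RR[n]}).@[pt c] *: LL c.
  by rewrite mcoeff_msupp => /hb; apply: interp_mon.
rewrite {1}(mpolyE R) (eq_big_seq _ (fun r hr => congr1 _ (hX r hr))) /=.
under eq_bigr => r _ do rewrite scaler_sumr.
rewrite exchange_big /=; apply: eq_bigr => c _.
rewrite mevalE scaler_suml; apply: eq_bigr => r _.
by rewrite scalerA mevalX.
Qed.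

Lemma CN (R : {mpoly RR[n]}) : box R -> (forall c, R.@[pt c] = 0) -> R = 0.
Proof.
move=> hb h0; rewrite (interp_box hb) big1 // => c _; by rewrite h0 scale0r.
Qed.

Definition FF : {mpoly RR[n]} := \prod_i lift i (fp m).

Lemma box_FF : box FF.
Proof.
move=> r; rewrite mcoeff_sep => /prodf_neq0 h i.
have := h i isT; apply: contraNT; rewrite -ltnNge => hi.
by rewrite nth_default // size_fp.
Qed.

Lemma box_add R S : box R -> box S -> box (R - S).
Proof.
move=> hR hS r; rewrite mcoeffB; case: (eqVneq (R@_r) 0) => [->|/hR //].
by rewrite sub0r oppr_eq0 => /hS.
Qed.

Lemma box_scale c R : box R -> box (c *: R).
Proof. by move=> hR r; rewrite mcoeffZ mulf_eq0 negb_or => /andP [_ /hR]. Qed.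

Definition c0 : {ffun 'I_n -> 'I_m.+1} := [ffun=> ord0].


Lemma FF_eval c : FF.@[pt c] = \prod_i (fp m).[(c i : nat)%:R].
Proof. by rewrite /FF; elim/big_rec2: _ => [|i x y _ <-]; rewrite ?meval1 // mevalM meval_lift. Qed.

Lemma FF_zero c : c != c0 -> FF.@[pt c] = 0.
Proof.
move=> hc; have [i hi] : exists i, c i != ord0.
  apply/existsP; apply: contraR hc; rewrite negb_exists => /forallP h.
  by apply/eqP/ffunP => i; rewrite ffunE; move: (h i); rewrite negbK => /eqP.
rewrite FF_eval (bigD1 i) //= fp_root ?mul0r //.
by have := ltn_ord (c i); move: hi; rewrite -(inj_eq val_inj) /= => hi; lia.
Qed.

Lemma FF_c0 : FF.@[pt c0] != 0.
Proof.
rewrite FF_eval; apply/prodf_neq0 => i _; rewrite ffunE /=.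
exact: fp0_neq0.
Qed.

Lemma CN_punct (R : {mpoly RR[n]}) : box R -> (forall c, c != c0 -> R.@[pt c] = 0) ->
  R = (R.@[pt c0] / FF.@[pt c0]) *: FF.
Proof.
move=> hb h0; apply/eqP; rewrite -subr_eq0; apply/eqP; apply: CN.
  by apply: box_add => //; apply: box_scale; apply: box_FF.
move=> c; rewrite mevalB mevalZ.
have [->|hc] := eqVneq c c0; last first.
  by rewrite h0 // (FF_zero hc) mulr0 subrr.
by rewrite divfK ?subrr // FF_c0.
Qed.
End CN.
Section Comb.
Variable n : nat.

Lemma sum_count_mem (s : seq 'I_n) : (\sum_i count_mem i s)%N = size s.
Proof.
elim: s => [|x s ih]; first by rewrite big1.
rewrite /= big_split /= ih (bigD1 x) //= eqxx big1 // => i.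
by rewrite eq_sym => /negPf ->.
Qed.

Lemma tuple_exists (k : nat) (c : 'I_n -> nat) : (k <= \sum_i c i)%N ->
  exists s : k.-tuple 'I_n, forall i, (count_mem i s <= c i)%N.
Proof.
elim: k => [|k ih] hk; first by exists [tuple] => i.
have [s hs] := ih (ltnW hk).
have [i hi] : exists i, (count_mem i s < c i)%N.
  apply/existsP; move: hk; apply: contraLR => /existsPn h.
  rewrite -leqNgt -(size_tuple s) -sum_count_mem; apply: leq_sum => i _.
  by rewrite leqNgt h.
exists [tuple of i :: s] => j /=.
by case: eqP => [<-|_]; rewrite ?add1n ?add0n //; apply: hs.
Qed.

Lemma exists_gt (e f : 'I_n -> nat) j : (\sum_i e i <= \sum_i f i)%N -> e j != f j ->
  exists i, (e i < f i)%N.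
Proof.
move=> hs hj; apply/existsP; apply: contraLR hs => /existsPn h.
have h' i : (f i <= e i)%N by rewrite leqNgt h.
rewrite -ltnNge (bigD1 j (F := f)) // (bigD1 j (F := e)) //=.
rewrite -addSn leq_add //; first by rewrite ltn_neqAle eq_sym hj h'.
by apply: leq_sum => i _.
Qed.

Lemma exists_lt_mdeg (nu : 'X_{1..n}) (e : 'I_n -> nat) :
  (mdeg nu < \sum_i e i)%N -> exists i, (nu i < e i)%N.
Proof.
move=> h; apply/existsP; move: h; apply: contraLR => /existsPn hn.
rewrite -leqNgt mdegE; apply: leq_sum => i _; by rewrite leqNgt hn.
Qed.

Lemma zmg0 a K : zero_mult_ge (0 : {mpoly RR[n]}) a K.
Proof. by move=> mu _; rewrite raddf0 meval0. Qed.
Lemma zmg_add (f g : {mpoly RR[n]}) a K :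
  zero_mult_ge f a K -> zero_mult_ge g a K -> zero_mult_ge (f + g) a K.
Proof. by move=> hf hg mu hmu; rewrite mderivmD mevalD hf ?hg ?addr0. Qed.
Lemma zmg_opp (f : {mpoly RR[n]}) a K :
  zero_mult_ge f a K -> zero_mult_ge (- f) a K.
Proof. by move=> hf mu hmu; rewrite mderivmN mevalN hf ?oppr0. Qed.
Lemma zmg_scale c (f : {mpoly RR[n]}) a K :
  zero_mult_ge f a K -> zero_mult_ge (c *: f) a K.
Proof. by move=> hf mu hmu; rewrite mderivmZ mevalZ hf ?mulr0. Qed.
Lemma zmg_sum (I : Type) (r : seq I) (P : pred I) (F : I -> {mpoly RR[n]}) a K :
  (forall i, P i -> zero_mult_ge (F i) a K) -> zero_mult_ge (\sum_(i <- r | P i) F i) a K.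
Proof.
move=> h; elim/big_ind: _ => [|x y hx hy|i hi]; [exact: zmg0 | exact: zmg_add hx hy | exact: h].
Qed.

Lemma vanish_sub m k (f g : {mpoly RR[n]}) :
  vanish_cond m k f -> vanish_cond m k g -> vanish_cond m k (f - g).
Proof.
move=> [h1 h2] [h3 h4]; split; last exact: (zmg_add h2 (zmg_opp h4)).
by move=> c hc hnz; exact: (zmg_add (h1 c hc hnz) (zmg_opp (h3 c hc hnz))).
Qed.

Lemma Sm_mulsep (phi w : 'I_n -> {poly RR}) e :
  Sm phi e * \prod_i lift i (w i) = \prod_i lift i (phi i ^+ e i * w i).
Proof. by rewrite /Sm -big_split; apply: eq_bigr => i _; rewrite liftM. Qed.
End Comb.

Section Van.
Variables n m : nat.
Local Notation gp := (gp m).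
Local Notation fp := (fp m).

Lemma V1 (e : 'I_n -> nat) (W : {mpoly RR[n]}) a K :
  (forall i, gp.[a i] = 0) -> (K <= \sum_i e i)%N ->
  zero_mult_ge (Sm (fun=> gp) e * W) a K.
Proof.
move=> ha hK mu hmu; apply: D1 => //.
by apply: exists_lt_mdeg; apply: leq_trans hK.
Qed.

Lemma V2 (e : 'I_n -> nat) a K l :
  (forall i, gp.[a i] = 0) -> fp.[a l] = 0 -> (K <= (\sum_i e i).+1)%N ->
  zero_mult_ge (Sm (fun=> gp) e * FF n m) a K.
Proof.
move=> ha hl hK.
pose phi := fun i => if i == l then fp else gp.
pose e' := fun i => if i == l then (e i).+1 else e i.
pose w := fun i => if i == l then 'X^(e i) else fp.
have -> : Sm (fun=> gp) e * FF n m = Sm phi e' * \prod_i lift i (w i).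
  rewrite /FF !Sm_mulsep; apply: eq_bigr => i _; rewrite /phi /e' /w.
  case: eqP => _ //; rewrite gp_Xf exprMn exprSr.
  set u := fp ^+ e i; set v := ('X : {poly RR}) ^+ e i.
  by rewrite alg2.
move=> mu hmu; apply: D1.
  by move=> i; rewrite /phi; case: eqP => [->|].
apply: exists_lt_mdeg; apply: (leq_trans hmu); apply: (leq_trans hK).
rewrite (bigD1 l) //= [X in (_ <= X)%N](bigD1 l) //= /e' eqxx addSn ltnS leq_add2l.
by apply: leq_sum => i /negPf ->.
Qed.
End Van.
Section Helpers.
Variable n : nat.

Lemma sum_neq0_cond (I : finType) (P : pred I) (F : I -> RR) :
  \sum_(i | P i) F i != 0 -> exists i, P i /\ F i != 0.
Proof.
rewrite big_mkcond /= => /sum_neq0_exists [i _]; case: ifP => hP hF.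
  by exists i.
by case/eqP: hF.
Qed.

Lemma mul_supp (p q : {mpoly RR[n]}) r : (p * q)@_r != 0 ->
  exists r1 r2, [/\ r = (r1 + r2)%MM, p@_r1 != 0 & q@_r2 != 0].
Proof.
rewrite -mcoeff_msupp => /msuppM_le /allpairsP [[r1 r2] /= [h1 h2 ->]].
by exists r1, r2; rewrite -!mcoeff_msupp.
Qed.

Lemma msize_le (p : {mpoly RR[n]}) d : (forall r, p@_r != 0 -> (mdeg r < d)%N) -> (msize p <= d)%N.
Proof.
move=> h; rewrite msizeE; apply/bigmax_leqP_seq => r hr _.
by apply: h; rewrite -mcoeff_msupp.
Qed.

Lemma sum_lt (e f : 'I_n -> nat) j : (forall i, e i <= f i)%N -> e j != f j ->
  (\sum_i e i < \sum_i f i)%N.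
Proof.
move=> h hj; rewrite (bigD1 j (F := e)) // (bigD1 j (F := f)) //=.
rewrite -addSn leq_add //; first by rewrite ltn_neqAle hj h.
by apply: leq_sum => i _.
Qed.

Lemma GG_supp m (e : 'I_n -> nat) r : (Sm (fun=> gp m) e)@_r != 0 ->
  forall i, (r i <= m.+1 * e i)%N.
Proof.
rewrite mcoeff_sep => /prodf_neq0 h i; have := h i isT.
apply: contraNT; rewrite -ltnNge => hi; rewrite nth_default //.
have h1 := size_exp (gp m) (e i); rewrite size_gp /= in h1.
have h2 : size (gp m ^+ e i) != 0%N by rewrite size_poly_eq0 expf_neq0 // gp_neq0.
by rewrite -(prednK (n := size _)) ?lt0n // h1.
Qed.

Lemma FF_m1 m : (FF n m)@_[multinom m | i < n] = 1.
Proof. rewrite /FF mcoeff_sep; apply: big1 => i _; by rewrite mnmE fp_lead. Qed.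

Lemma mdeg_box m (r : 'X_{1..n}) : (forall i, r i <= m)%N -> (mdeg r <= m * n)%N.
Proof.
move=> h; rewrite mdegE (@leq_trans (\sum_(i < n) m)) //; first by apply: leq_sum => i _.
by rewrite sum_nat_const card_ord mulnC.
Qed.

Lemma mdeg_box_lt m (r : 'X_{1..n}) : (forall i, r i <= m)%N -> r != [multinom m | i < n] ->
  (mdeg r < m * n)%N.
Proof.
move=> h hr.
have [j hj] : exists j, r j != m.
  apply/existsP; apply: contraR hr; rewrite negb_exists => /forallP hn.
  by apply/eqP/mnmP => i; rewrite mnmE; move: (hn i); rewrite negbK => /eqP.
rewrite mdegE (leq_trans (sum_lt (f := fun=> m) h hj)) //.
by rewrite sum_nat_const card_ord mulnC.
Qed.
End Helpers.
Section Main.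
Variables n m k : nat.
Hypothesis hk : (2 <= k)%N.

Local Notation m1 := ([multinom m | i < n] : 'X_{1..n}).
Definition wt B (q : {ffun 'I_n -> 'I_B}) := (\sum_i (q i : nat))%N.
Definition Gq B (q : {ffun 'I_n -> 'I_B}) : {mpoly RR[n]} := Sm (fun=> gp m) (fun i => (q i : nat)).
Definition cq B (P : {mpoly RR[n]}) (q : {ffun 'I_n -> 'I_B}) : RR :=
  if wt q == k.-1 then (Rq m P q)@_m1 else 0.
Definition Sq B (P : {mpoly RR[n]}) (q : {ffun 'I_n -> 'I_B}) : {mpoly RR[n]} :=
  Rq m P q - cq P q *: FF n m.

Lemma Sq_prop B (P : {mpoly RR[n]}) (q : {ffun 'I_n -> 'I_B}) r : (Sq P q)@_r != 0 ->
  [/\ forall i, (r i <= m)%N,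
      exists2 mu, mu \in msupp P & forall i, (m.+1 * q i + r i <= mu i)%N
    & wt q = k.-1 -> r != m1].
Proof.
rewrite /Sq /cq mcoeffB mcoeffZ.
case: ifP => /eqP hw; last first.
  rewrite mul0r subr0 => /Rq_coef [mu hmu h]; split => // [i|]; first by case: (h i).
  by exists mu => // i; case: (h i).
have [->|hr] := eqVneq r m1; first by rewrite FF_m1 mulr1 subrr eqxx.
move=> hnz; have [h0|h0] := eqVneq ((Rq m P q)@_r) 0.
  move: hnz; rewrite h0 sub0r oppr_eq0 mulf_eq0 negb_or => /andP [hc hF].
  have [mu hmu h] := Rq_coef hc.
  have hb := box_FF hF.
  split; [exact: hb | exists mu | by []]; rewrite ?hmu // => i; case: (h i); rewrite mnmE => _; have := hb i; lia.
have [mu hmu h] := Rq_coef h0.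
split; [by move=> i; case: (h i) | by exists mu => // i; case: (h i) | by []].
Qed.
End Main.
Section Exist.
Variables n m k : nat.
Hypothesis hk : (2 <= k)%N.
Local Notation m1 := ([multinom m | i < n] : 'X_{1..n}).

Variable P : {mpoly RR[n]}.
Local Notation B := (msize P).
Definition P0 : {mpoly RR[n]} :=
  \sum_(q : {ffun 'I_n -> 'I_B} | (wt q < k)%N) Gq m q * Sq m k P q.

Lemma P0_mon r : P0@_r != 0 -> exists q : {ffun 'I_n -> 'I_B}, exists r1 r2,
  [/\ (wt q < k)%N, r = (r1 + r2)%MM, forall i, (r1 i <= m.+1 * q i)%N,
      (forall i, (r2 i <= m)%N)
    & (exists2 mu, mu \in msupp P & forall i, (m.+1 * q i + r2 i <= mu i)%N) /\
      (wt q = k.-1 -> r2 != m1)].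
Proof.
rewrite /P0 raddf_sum /= => /sum_neq0_cond [q [hq /mul_supp [r1 [r2 [-> h1 h2]]]]].
have [b2 [mu hmu hb] hn] := Sq_prop hk h2.
exists q, r1, r2; split => //; first exact: GG_supp h1.
by split => //; exists mu.
Qed.

Lemma mdegDE (r1 r2 : 'X_{1..n}) : mdeg (r1 + r2)%MM = (\sum_i (r1 i + r2 i))%N.
Proof. by rewrite mdegE; apply: eq_bigr => i _; rewrite mnmDE. Qed.

Lemma P0_msize : (msize P0 <= msize P)%N.
Proof.
apply: msize_le => r /P0_mon [q [r1 [r2 [hq -> h1 hb [[mu hmu hm] _]]]]].
apply: leq_ltn_trans (msize_mdeg_lt hmu).
rewrite mdegDE mdegE; apply: leq_sum => i _.
by have := h1 i; have := hm i; lia.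
Qed.

Lemma count_le (c q : nat) : (m.+1 * c <= m.+1 * q + m)%N -> (c <= q)%N.
Proof.
move=> h; rewrite leqNgt; apply/negP => hc.
have : (m.+1 * q.+1 <= m.+1 * c)%N by rewrite leq_mul2l hc orbT.
rewrite mulnS; lia.
Qed.

Lemma P0_reduced : reduced m k P0.
Proof.
split.
  apply: msize_le => r /P0_mon [q [r1 [r2 [hq -> h1 hb [[mu hmu hm] hn]]]]].
  rewrite mdegD.
  have hr1 : (mdeg r1 <= m.+1 * wt q)%N.
    rewrite mdegE /wt big_distrr /=; exact: leq_sum.
  have hk1 : (m.+1 * k.-1 = m.+1 * k.-2 + m.+1)%N.
    by rewrite -mulnSr; congr (_ * _)%N; lia.
  have [hw|hw] := eqVneq (wt q) k.-1.
    have := mdeg_box_lt hb (hn hw); rewrite hw in hr1; lia.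
  have hw2 : (m.+1 * wt q <= m.+1 * k.-2)%N by rewrite leq_mul2l; apply/orP; right; lia.
  have := mdeg_box hb; lia.
move=> r hr s hs.
have hr' : P0@_r != 0 by rewrite -mcoeff_msupp.
have [q [r1 [r2 [hq er h1 hb _]]]] := P0_mon hr'.
have hc i : (count_mem i s <= q i)%N.
  apply: count_le; apply: leq_trans (hs i) _; rewrite er mnmDE.
  by have := h1 i; have := hb i; lia.
have : (\sum_i count_mem i s <= wt q)%N by apply: leq_sum => i _.
rewrite sum_count_mem size_tuple; lia.
Qed.

Lemma P0_vanish : vanish_cond m k (P - P0).
Proof.
have eP : P = \sum_(q : {ffun 'I_n -> 'I_B}) Gq m q * Rq m P q by exact: expansion.
have -> : P - P0 = \sum_(q : {ffun 'I_n -> 'I_B} | ~~ (wt q < k)%N) Gq m q * Rq m P q +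
     \sum_(q : {ffun 'I_n -> 'I_B} | (wt q < k)%N) cq m k P q *: (Gq m q * FF n m).
  rewrite {1}eP (bigID (fun q : {ffun 'I_n -> 'I_B} => (wt q < k)%N)) /= addrC -addrA; congr (_ + _).
  rewrite /P0 -sumrB; apply: eq_bigr => q _; rewrite /Sq mulrBr subKr.
  by rewrite scalerAr.
have g0 : (gp m).[0] = 0 by have := @gp_root m 0%N (leq0n _); rewrite mulr0n.
split.
  move=> c hc [l hl].
  have ha i : (gp m).[real_pt c i] = 0 by apply: gp_root; apply: hc.
  apply: zmg_add; apply: zmg_sum => q hq.
    by apply: V1 => //; rewrite leqNgt.
  rewrite /cq; case: ifP => [/eqP hw|_]; last by rewrite scale0r; apply: zmg0.
  apply: zmg_scale; apply: (V2 (l := l)) => //; last by move: hw; rewrite /wt => ->; lia.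
  by apply: fp_root; have := hc l; lia.
apply: zmg_add; apply: zmg_sum => q hq.
  by apply: V1 => //; move: hq; rewrite /wt -leqNgt => h; lia.
rewrite /cq; case: ifP => [/eqP hw|_]; last by rewrite scale0r; apply: zmg0.
by apply: zmg_scale; apply: V1 => //; move: hw; rewrite /wt => ->.
Qed.
End Exist.
Section Uniq.
Variables n m k : nat.
Hypothesis hk : (2 <= k)%N.
Local Notation m1 := ([multinom m | i < n] : 'X_{1..n}).
Variable Z : {mpoly RR[n]}.
Hypothesis hZr : reduced m k Z.
Hypothesis hZv : vanish_cond m k Z.
Local Notation B := (msize Z).

Lemma RA (q : {ffun 'I_n -> 'I_B}) : (k <= wt q)%N -> Rq m Z q = 0.
Proof.
move=> hw; apply/mpolyP => r; rewrite mcoeff0; apply/eqP; apply: contraT => hr.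
have [mu hmu h] := Rq_coef hr.
have [s hs] := tuple_exists hw.
case: (hZr.2 mu hmu s) => i.
case: (h i) => _ hmi; apply: leq_trans hmi.
by rewrite (leq_trans _ (leq_addr _ _)) // leq_mul2l hs orbT.
Qed.

Lemma RB (q : {ffun 'I_n -> 'I_B}) : wt q = k.-1 -> (Rq m Z q)@_m1 = 0.
Proof.
move=> hw; apply/eqP; apply: contraT => hr.
have [mu hmu h] := Rq_coef hr.
have h1 := msize_mdeg_lt hmu.
have h2 := hZr.1.
have h3 : (m.+1 * wt q + m * n <= mdeg mu)%N.
  have -> : (m * n = \sum_(i < n) m)%N by rewrite sum_nat_const card_ord mulnC.
  rewrite mdegE /wt big_distrr /= -big_split /=; apply: leq_sum => i _.
  by have := h i; rewrite mnmE; case.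
rewrite hw in h3; lia.
Qed.

Lemma c0_ne (c : {ffun 'I_n -> 'I_m.+1}) : c != c0 n m -> exists i, (c i : nat) <> 0%N.
Proof.
move=> hc; have [i hi] : exists i, c i != ord0.
  apply/existsP; apply: contraR hc; rewrite negb_exists => /forallP h.
  by apply/eqP/ffunP => i; rewrite ffunE; move: (h i); rewrite negbK => /eqP.
by exists i => e; move: hi; rewrite -(inj_eq val_inj) /= e.
Qed.

Lemma ffun_ne B' (q q' : {ffun 'I_n -> 'I_B'}) : q' != q -> exists i, (q i : nat) != q' i.
Proof.
move=> h; apply/existsP; apply: contraR h; rewrite negb_exists => /forallP hn.
apply/eqP/ffunP => i; apply/eqP; rewrite -(inj_eq val_inj) /= eq_sym.
by move: (hn i); rewrite negbK.
Qed.

Lemma RC j : forall q : {ffun 'I_n -> 'I_B}, wt q = j -> (j < k)%N -> Rq m Z q = 0.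
Proof.
have eZ : Z = \sum_(q : {ffun 'I_n -> 'I_B}) Gq m q * Rq m Z q by exact: expansion.
elim/ltn_ind: j => j IH q hq hjk.
set R := Rq m Z q.
have hbox : box m R by move=> r /Rq_coef [mu _ h] i; case: (h i).
pose nu : 'X_{1..n} := [multinom (q i : nat) | i < n].
have hnu : mdeg nu = j by rewrite mdegE -hq; apply: eq_bigr => i _; rewrite mnmE.
have hval (c : {ffun 'I_n -> 'I_m.+1}) : (Z^`M[nu]).@[pt c] = 0 -> R.@[pt c] = 0.
  have ha i : (gp m).[pt c i] = 0 by apply: gp_root; rewrite -ltnS.
  rewrite {1}eZ raddf_sum raddf_sum (bigD1 q) //= big1 ?addr0; last first.
    move=> q' hq'.
    have [hlt|hge] := ltnP (wt q') j.
      by rewrite (IH _ hlt q' erefl) ?mulr0 ?raddf0 ?meval0 //; lia.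
    have [hk'|hk'] := leqP k (wt q'); first by rewrite RA // mulr0 raddf0 meval0.
    have [i hi] := ffun_ne hq'.
    have hsum : (\sum_i (q i : nat) <= \sum_i (q' i : nat))%N by move: hge; rewrite /wt -hq.
    have [i' hi'] := exists_gt hsum hi.
    by rewrite /Gq; apply: D1 => //; exists i'; rewrite mnmE.
  rewrite /Gq (@Sm_eq n (fun=> gp m) _ (fun i => nu i)); last by move=> i; rewrite mnmE.
  rewrite D2 // => /eqP; rewrite mulf_eq0 => /orP [h0|/eqP //].
  exfalso; move: h0; apply/negP; apply/prodf_neq0 => i _.
  rewrite mulf_neq0 //; first by rewrite pnatr_eq0 -lt0n fact_gt0.
  by rewrite expf_neq0 // gp_deriv_neq0 // -ltnS.
have hZ0 (c : {ffun 'I_n -> 'I_m.+1}) : c != c0 n m \/ (j < k.-1)%N -> (Z^`M[nu]).@[pt c] = 0.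
  have [->|hc] := eqVneq c (c0 n m) => hor.
    have hj : (j < k.-1)%N by case: hor => // /eqP.
    rewrite (@meval_eq _ _ _ (fun _ => 0)); first by apply: hZv.2; rewrite hnu.
    by move=> i; rewrite /pt ffunE.
  have hin : in_mBn m (fun i => (c i : nat)) by move=> i; rewrite -ltnS.
  by apply: (hZv.1 _ hin (c0_ne hc) nu); rewrite hnu.
have [hj|hj] := ltnP j k.-1.
  by apply: (CN hbox) => c; apply: hval; apply: hZ0; right.
have e := CN_punct hbox (fun c hc => hval c (hZ0 c (or_introl hc))).
have hw : wt q = k.-1 by rewrite hq; lia.
have h := RB hw; rewrite -/R e mcoeffZ FF_m1 mulr1 in h.
by rewrite e h scale0r.
Qed.

Lemma uniq_main : Z = 0.
Proof.
rewrite (@expansion n m Z (msize Z) (leqnn _)) big1 // => q _.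
have [h|h] := ltnP (wt q) k; first by rewrite (RC erefl h) mulr0.
by rewrite RA // mulr0.
Qed.
End Uniq.
Lemma reduced_sub (n m k : nat) (p q : {mpoly RR[n]}) :
  reduced m k p -> reduced m k q -> reduced m k (p - q).
Proof.
move=> [h1 h2] [h3 h4]; split.
  apply: leq_trans (msizeD_le _ _) _; rewrite msizeN geq_max h1 h3 //.
move=> mu /msuppB_le; rewrite mem_cat => /orP [] hmu s.
  exact: h2.
exact: h4.
Qed.

Theorem corollary3p4 (n m k : nat) (P : {mpoly RR[n]}) :
  (1 <= m)%N -> (1 <= n)%N -> (2 <= k)%N ->
  exists P0 : {mpoly RR[n]},
    [/\ reduced m k P0, vanish_cond m k (P - P0),
        (forall Q : {mpoly RR[n]}, reduced m k Q -> vanish_cond m k (P - Q) -> Q = P0)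
      & (msize P0 <= msize P)%N].
Proof.
move=> hm hn hk.
exists (P0 m k P); split.
- exact: P0_reduced.
- exact: P0_vanish.
- move=> Q hQr hQv; apply/eqP; rewrite -subr_eq0; apply/eqP.
  apply: (uniq_main hk (reduced_sub hQr (P0_reduced m hk P))).
  have -> : Q - P0 m k P = (P - P0 m k P) - (P - Q).
    by ring.
  exact: vanish_sub (P0_vanish m hk P) hQv.
- exact: P0_msize.
Qed.
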